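(* Let $\mathcal C$ be a single-mixed $\mathsf{B1}$-category satisfying $\Pi_{\mathbf t}=\mathrm{id}_{\mathbf t}$. Then for every map $f\colon A\to\mathbf t$ we have $f+\Pi_A=f$, and dually for every map $g\colon\mathbf f\to B$ we have $g+\amalg_B=g$.
   Context: A *-autonomous category is a symmetric monoidal category $(\mathcal C,\wedge,\mathbf t)$ with natural isomorphisms $\alpha,\sigma$, $\rho_A\colon A\wedge\mathbf t\to A$, $\lambda_A\colon\mathbf t\wedge A\to A$, a contravariant functor $A\mapsto\bar A$ with natural isomorphism $\bar{\bar A}\cong A$, and a natural bijection $\mathrm{Hom}(A\wedge B,C)\cong\mathrm{Hom}(A,\bar B\vee C)$, where $A\vee B:=\overline{\bar B\wedge\bar A}$, $\mathbf f:=\bar{\mathbf t}$; $\vee$ is symmetric monoidal with unit isomorphisms $\check\rho_A\colon A\vee\mathbf f\to A$, $\check\lambda_A\colon\mathbf f\vee A\to A$. Switch maps $s$ are the canonical natural maps $A\wedge(B\vee C)\to(A\wedge B)\vee C$ (and variants via symmetries) obtained by transposition. A $\mathsf{B1}$-category is a *-autonomous category such that (1) there is a Boolean algebra $\mathcal B$ and a function $F$ from objects to $\mathcal B$ with $F(A)\le F(B)$ iff $\mathrm{Hom}(A,B)\ne\emptyset$, and (2) every object $A$ carries a cocommutative $\wedge$-comonoid $\Delta_A\colon A\to A\wedge A$, $\Pi_A\colon A\to\mathbf t$ (coassociative, cocommutative, $\rho_A\circ(A\wedge\Pi_A)\circ\Delta_A=\mathrm{id}_A$). Dually every object carries a commutative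 $\vee$-monoid $\nabla_A\colon A\vee A\to A$, $\amalg_A\colon\mathbf f\to A$ (the duals of $\Delta_{\bar A},\Pi_{\bar A}$). The category is single-mixed if $\Pi_{\mathbf f}=\amalg_{\mathbf t}$; then with $e=\Pi_{\mathbf f}$ set $\mathrm{mix}_{A,B}:=(A\vee\lambda_B)\circ(A\vee(e\wedge B))\circ s\circ(\check\rho_A^{-1}\wedge B)\colon A\wedge B\to A\vee B$, and for $f,g\colon A\to B$ define $f+g:=\nabla_B\circ(f\vee g)\circ\mathrm{mix}_{A,A}\circ\Delta_A$. *)

(* Defs.v *)
From mathcomp Require Import all_boot all_order.

Set Implicit Arguments.
Unset Strict Implicit.
Unset Printing Implicit Defensive.

Import Order.Theory.

(* A \/ B := bar (bar B /\ bar A).  Hom-sets are types, with Leibniz        *)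
(* equality of morphisms.                                                   *)

Record StarAut : Type := {
  Ob : Type;
  Hom : Ob -> Ob -> Type;
  comp : forall {A B C : Ob}, Hom B C -> Hom A B -> Hom A C;
  idm : forall (A : Ob), Hom A A;
  comp_idl : forall A B (f : Hom A B), comp (idm B) f = f;
  comp_idr : forall A B (f : Hom A B), comp f (idm A) = f;
  comp_assoc : forall A B C D (f : Hom A B) (g : Hom B C) (h : Hom C D),
      comp h (comp g f) = comp (comp h g) f;

  tens : Ob -> Ob -> Ob;
  tensm : forall {A A' B B' : Ob}, Hom A A' -> Hom B B' -> Hom (tens A B) (tens A' B');
  tensm_id : forall A B, tensm (idm A) (idm B) = idm (tens A B);
  tensm_comp : forall A A' A'' B B' B'' (f : Hom A A') (f' : Hom A' A'')
      (g : Hom B B') (g' : Hom B' B''),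
      tensm (comp f' f) (comp g' g) = comp (tensm f' g') (tensm f g);
  unit : Ob;

  assoc : forall A B C, Hom (tens A (tens B C)) (tens (tens A B) C);
  assoc_inv : forall A B C, Hom (tens (tens A B) C) (tens A (tens B C));
  assoc_iso1 : forall A B C, comp (assoc_inv A B C) (assoc A B C) = idm _;
  assoc_iso2 : forall A B C, comp (assoc A B C) (assoc_inv A B C) = idm _;
  assoc_nat : forall A A' B B' C C' (f : Hom A A') (g : Hom B B') (h : Hom C C'),
      comp (assoc A' B' C') (tensm f (tensm g h))
      = comp (tensm (tensm f g) h) (assoc A B C);

  sym : forall A B, Hom (tens A B) (tens B A);
  sym_inv : forall A B, comp (sym B A) (sym A B) = idm _;
  sym_nat : forall A A' B B' (f : Hom A A') (g : Hom B B'),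
      comp (sym A' B') (tensm f g) = comp (tensm g f) (sym A B);

  runit : forall A, Hom (tens A unit) A;
  runit_inv : forall A, Hom A (tens A unit);
  runit_iso1 : forall A, comp (runit_inv A) (runit A) = idm _;
  runit_iso2 : forall A, comp (runit A) (runit_inv A) = idm _;
  runit_nat : forall A A' (f : Hom A A'),
      comp (runit A') (tensm f (idm unit)) = comp f (runit A);
  lunit : forall A, Hom (tens unit A) A;
  lunit_inv : forall A, Hom A (tens unit A);
  lunit_iso1 : forall A, comp (lunit_inv A) (lunit A) = idm _;
  lunit_iso2 : forall A, comp (lunit A) (lunit_inv A) = idm _;
  lunit_nat : forall A A' (f : Hom A A'),
      comp (lunit A') (tensm (idm unit) f) = comp f (lunit A);

  pentagon : forall A B C D,
      comp (assoc_inv A B (tens C D)) (assoc_inv (tens A B) C D)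
      = comp (tensm (idm A) (assoc_inv B C D))
          (comp (assoc_inv A (tens B C) D) (tensm (assoc_inv A B C) (idm D)));
  triangle : forall A B,
      comp (tensm (idm A) (lunit B)) (assoc_inv A unit B)
      = tensm (runit A) (idm B);
  hexagon : forall A B C,
      comp (assoc_inv B C A) (comp (sym A (tens B C)) (assoc_inv A B C))
      = comp (tensm (idm B) (sym A C))
          (comp (assoc_inv B A C) (tensm (sym A B) (idm C)));

  neg : Ob -> Ob;
  negm : forall {A B : Ob}, Hom A B -> Hom (neg B) (neg A);
  negm_id : forall A, negm (idm A) = idm (neg A);
  negm_comp : forall A B C (f : Hom A B) (g : Hom B C),
      negm (comp g f) = comp (negm f) (negm g);

  dn : forall A, Hom (neg (neg A)) A;
  dn_inv : forall A, Hom A (neg (neg A));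
  dn_iso1 : forall A, comp (dn_inv A) (dn A) = idm _;
  dn_iso2 : forall A, comp (dn A) (dn_inv A) = idm _;
  dn_nat : forall A B (f : Hom A B), comp (dn B) (negm (negm f)) = comp f (dn A);

  (* natural bijection Hom(A /\ B, C) ~= Hom(A, bar B \/ C),
     where bar B \/ C = bar (bar C /\ bar bar B) *)
  cur : forall {A B C : Ob}, Hom (tens A B) C -> Hom A (neg (tens (neg C) (neg (neg B))));
  uncur : forall {A B C : Ob}, Hom A (neg (tens (neg C) (neg (neg B)))) -> Hom (tens A B) C;
  cur_uncur : forall A B C (g : Hom A (neg (tens (neg C) (neg (neg B))))), cur (uncur g) = g;
  uncur_cur : forall A B C (g : Hom (tens A B) C), uncur (cur g) = g;
  cur_nat_AC : forall A A' B C C' (f : Hom A' A) (g : Hom (tens A B) C) (h : Hom C C'),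
      cur (comp h (comp g (tensm f (idm B))))
      = comp (negm (tensm (negm h) (idm (neg (neg B))))) (comp (cur g) f);
  cur_nat_B : forall A B B' C (k : Hom B' B) (g : Hom (tens A B) C),
      cur (comp g (tensm (idm A) k))
      = comp (negm (tensm (idm (neg C)) (negm (negm k)))) (cur g)
}.

Arguments Hom {s} _ _.
Arguments comp {s A B C} _ _.
Arguments idm {s} A.
Arguments tens {s} _ _.
Arguments tensm {s A A' B B'} _ _.
Arguments unit {s}.
Arguments assoc {s} A B C.
Arguments assoc_inv {s} A B C.
Arguments sym {s} A B.
Arguments runit {s} A.
Arguments runit_inv {s} A.
Arguments lunit {s} A.
Arguments lunit_inv {s} A.
Arguments neg {s} _.
Arguments negm {s A B} _.
Arguments dn {s} A.
Arguments dn_inv {s} A.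
Arguments cur {s A B C} _.
Arguments uncur {s A B C} _.

Section Derived.
Variable C : StarAut.

Definition par (A B : Ob C) : Ob C := neg (tens (neg B) (neg A)).
Definition parm {A A' B B' : Ob C} (f : Hom A A') (g : Hom B B') :
  Hom (par A B) (par A' B') := negm (tensm (negm g) (negm f)).
Definition fls : Ob C := neg unit.

Definition rho_par (A : Ob C) : Hom (par A fls) A :=
  comp (dn A) (comp (negm (lunit_inv (neg A)))
                    (negm (tensm (dn_inv unit) (idm (neg A))))).
Definition rho_par_inv (A : Ob C) : Hom A (par A fls) :=
  comp (negm (tensm (dn unit) (idm (neg A))))
       (comp (negm (lunit (neg A))) (dn_inv A)).

Definition ev (A B : Ob C) : Hom (tens (par A B) (neg A)) B :=
  uncur (parm (dn_inv A) (idm B)).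

Definition switch (A B D : Ob C) : Hom (tens (par A B) D) (par A (tens B D)) :=
  let k : Hom (tens (tens (par A B) D) (neg A)) (tens B D) :=
    comp (tensm (ev A B) (idm D))
      (comp (assoc (par A B) (neg A) D)
        (comp (tensm (idm (par A B)) (sym D (neg A)))
              (assoc_inv (par A B) D (neg A)))) in
  comp (parm (dn A) (idm (tens B D))) (cur k).

End Derived.

Arguments par {C} A B.
Arguments parm {C A A' B B'} f g.
Arguments fls {C}.
Arguments rho_par {C} A.
Arguments rho_par_inv {C} A.
Arguments ev {C} A B.
Arguments switch {C} A B D.

Record B1cat : Type := {
  b1_sa :> StarAut;
  b1_bool : exists (d : Order.disp_t) (L : ctbDistrLatticeType d) (F : Ob b1_sa -> L),
      forall A B : Ob b1_sa, ((F A <= F B)%O : Prop) <-> inhabited (Hom A B);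
  Delta : forall A : Ob b1_sa, Hom A (tens A A);
  Pi : forall A : Ob b1_sa, Hom A unit;
  Delta_coassoc : forall A,
      comp (assoc A A A) (comp (tensm (idm A) (Delta A)) (Delta A))
      = comp (tensm (Delta A) (idm A)) (Delta A);
  Delta_cocomm : forall A, comp (sym A A) (Delta A) = Delta A;
  Delta_counit : forall A,
      comp (runit A) (comp (tensm (idm A) (Pi A)) (Delta A)) = idm A
}.

Arguments Delta {b} A.
Arguments Pi {b} A.

Section B1Derived.
Variable C : B1cat.

Definition nabla (A : Ob C) : Hom (par A A) A := comp (dn A) (negm (Delta (neg A))).
Definition amalg (A : Ob C) : Hom fls A := comp (dn A) (negm (Pi (neg A))).

Definition single_mixed : Prop := Pi (@fls C) = amalg unit.

Definition mix (A B : Ob C) : Hom (tens A B) (par A B) :=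
  comp (parm (idm A) (lunit B))
    (comp (parm (idm A) (tensm (Pi (@fls C)) (idm B)))
      (comp (switch A fls B) (tensm (rho_par_inv A) (idm B)))).

Definition plus {A B : Ob C} (f g : Hom A B) : Hom A B :=
  comp (nabla B) (comp (parm f g) (comp (mix A A) (Delta A))).

End B1Derived.

Arguments nabla {C} A.
Arguments amalg {C} A.
Arguments mix {C} A B.
Arguments plus {C A B} f g.

(* Main.v *)
Require Import Defs.
From mathcomp Require Import ssreflect.

Notation "g ⋅ f" := (comp g f) (at level 39, right associativity).
Notation "f ⊗ g" := (tensm f g) (at level 35).
Notation N := negm.

Section S.
Context {C : StarAut}.
Implicit Types A B X Y Z : Ob C.
Notation t := (@unit C).

Ltac ra := rewrite -?comp_assoc.

Lemma pre {A B C' D} {g : Hom B C'} {f : Hom A B} {h : Hom A C'} (E : g ⋅ f = h) (x : Hom D A) :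
  g ⋅ (f ⋅ x) = h ⋅ x.
Proof. by rewrite comp_assoc E. Qed.

Lemma tc {A A' A'' B B' B'' D} (f : Hom A A') (f' : Hom A' A'') (g : Hom B B') (g' : Hom B' B'') (x : Hom D (tens A B)) :
  (f' ⊗ g') ⋅ ((f ⊗ g) ⋅ x) = ((f' ⋅ f) ⊗ (g' ⋅ g)) ⋅ x.
Proof. by rewrite comp_assoc tensm_comp. Qed.

Lemma nc {A B C' D} (f : Hom A B) (g : Hom B C') (x : Hom D (neg C')) :
  N f ⋅ (N g ⋅ x) = N (g ⋅ f) ⋅ x.
Proof. by rewrite comp_assoc negm_comp. Qed.

Lemma tsplit {A A' B B'} (f : Hom A A') (g : Hom B B') : f ⊗ g = (f ⊗ idm B') ⋅ (idm A ⊗ g).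
Proof. by rewrite -tensm_comp comp_idl comp_idr. Qed.
Lemma tsplit' {A A' B B'} (f : Hom A A') (g : Hom B B') : f ⊗ g = (idm A' ⊗ g) ⋅ (f ⊗ idm B).
Proof. by rewrite -tensm_comp comp_idl comp_idr. Qed.

Lemma cancel_l {A B D} {i : Hom A B} {j : Hom B A} (E : j ⋅ i = idm A) {f g : Hom D A} :
  i ⋅ f = i ⋅ g -> f = g.
Proof. move=> H. by rewrite -(comp_idl f) -(comp_idl g) -E -!comp_assoc H. Qed.
Lemma cancel_r {A B D} {i : Hom A B} {j : Hom B A} (E : i ⋅ j = idm B) {f g : Hom B D} :
  f ⋅ i = g ⋅ i -> f = g.
Proof. move=> H. by rewrite -(comp_idr f) -(comp_idr g) -E !comp_assoc H. Qed.

Lemma cancel_tr {A B} (f g : Hom A B) : f ⊗ idm t = g ⊗ idm t -> f = g.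
Proof.
move=> H. apply: (cancel_r (runit_iso2 A)).
by rewrite -!runit_nat H.
Qed.
Lemma cancel_tl {A B} (f g : Hom A B) : idm t ⊗ f = idm t ⊗ g -> f = g.
Proof.
move=> H. apply: (cancel_r (lunit_iso2 A)).
by rewrite -!lunit_nat H.
Qed.

Lemma assoc_inv_nat {A A' B B' C' C''} (f : Hom A A') (g : Hom B B') (h : Hom C' C'') :
  assoc_inv A' B' C'' ⋅ ((f ⊗ g) ⊗ h) = (f ⊗ (g ⊗ h)) ⋅ assoc_inv A B C'.
Proof.
apply: (cancel_l (assoc_iso1 _ _ _)).
rewrite comp_assoc assoc_iso2 comp_idl (pre (assoc_nat _ _ _)).
by rewrite -comp_assoc assoc_iso2 comp_idr.
Qed.

Lemma dn_inv_nat {A B} (f : Hom A B) : dn_inv B ⋅ f = N (N f) ⋅ dn_inv A.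
Proof.
apply: (cancel_l (dn_iso1 B)).
rewrite comp_assoc dn_iso2 comp_idl comp_assoc dn_nat.
by rewrite -comp_assoc dn_iso2 comp_idr.
Qed.

Lemma NN_dn A : N (N (dn A)) = dn (neg (neg A)).
Proof.
apply: (cancel_l (dn_iso1 A)). by rewrite dn_nat.
Qed.

Lemma isoT {A B} Y {i : Hom A B} {j : Hom B A} : i ⋅ j = idm B -> (i ⊗ idm Y) ⋅ (j ⊗ idm Y) = idm _.
Proof. by move=> E; rewrite -tensm_comp E comp_idl tensm_id. Qed.

Lemma K2 X Y : lunit (tens X Y) ⋅ assoc_inv t X Y = lunit X ⊗ idm Y.
Proof.
have P := pentagon t t X Y.
have H := f_equal (comp (idm t ⊗ lunit (tens X Y))) P.
rewrite comp_assoc triangle -[idm (tens X Y)]tensm_id -assoc_inv_nat tc comp_idl in H.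
apply: cancel_tl.
apply (cancel_r (assoc_iso1 t (tens t X) Y)).
apply (cancel_r (isoT Y (assoc_iso1 t t X))).
rewrite -!comp_assoc -H.
rewrite (pre (eq_sym (assoc_inv_nat _ _ _))) -comp_assoc -tensm_comp comp_idl triangle.
by []. Qed.

Lemma K1 X Y : (idm X ⊗ runit Y) ⋅ assoc_inv X Y t = runit (tens X Y).
Proof.
have P := pentagon X Y t t.
have H := f_equal (comp (idm X ⊗ (idm Y ⊗ lunit t))) P.
rewrite /= (pre (eq_sym (assoc_inv_nat _ _ _))) -?comp_assoc tensm_id triangle in H.
rewrite tc comp_idl triangle (pre (eq_sym (assoc_inv_nat _ _ _))) -?comp_assoc -tensm_comp comp_idl in H.
apply: cancel_tr.
apply (cancel_l (assoc_iso2 X Y t)).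
by rewrite H.
Qed.

Lemma K3 : lunit t = runit t.
Proof.
have E : idm t ⊗ lunit t = lunit (tens t t).
  apply (cancel_l (lunit_iso1 t)). by rewrite lunit_nat.
have T := triangle t t.
rewrite E K2 in T.
exact: cancel_tr.
Qed.

Lemma sym_iso A B : sym A B ⋅ sym B A = idm _.
Proof. exact: sym_inv. Qed.

Lemma K4 A : runit A ⋅ sym unit A = lunit A.
Proof.
have Hx := hexagon A t t.
have H := f_equal (comp (lunit (tens t A))) Hx.
rewrite /= (pre (K2 _ _)) (pre (eq_sym (sym_nat _ _))) -?comp_assoc triangle in H.
rewrite (pre (lunit_nat _)) -?comp_assoc (pre (K2 _ _)) -?comp_assoc -tensm_comp comp_idl in H.
have H2 : runit A ⊗ idm t = (lunit A ⋅ sym A t) ⊗ idm t.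
  apply (cancel_l (sym_iso t A)). by rewrite H.
have H3 := cancel_tr _ _ H2.
by rewrite H3 -comp_assoc sym_iso comp_idr.
Qed.

Lemma N_id' A : N (idm A) = idm (neg A).
Proof. exact: negm_id. Qed.

Lemma parm_comp {A A' A'' B B' B''} (f : Hom A A') (f' : Hom A' A'') (g : Hom B B') (g' : Hom B' B'') :
  parm f' g' ⋅ parm f g = parm (f' ⋅ f) (g' ⋅ g).
Proof. by rewrite /parm -negm_comp -tensm_comp -!negm_comp. Qed.

Lemma parm_comp_r {A A' A'' B B' B'' D} (f : Hom A A') (f' : Hom A' A'') (g : Hom B B') (g' : Hom B' B'') (x : Hom D _) :
  parm f' g' ⋅ (parm f g ⋅ x) = parm (f' ⋅ f) (g' ⋅ g) ⋅ x.
Proof. by rewrite comp_assoc parm_comp. Qed.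

Lemma parm_id A B : parm (idm A) (idm B) = idm (par A B).
Proof. by rewrite /parm !negm_id tensm_id negm_id. Qed.

Lemma cur_inj {A B C'} (g g' : Hom (tens A B) C') : cur g = cur g' -> g = g'.
Proof. by move=> H; rewrite -(uncur_cur g) H uncur_cur. Qed.
Lemma uncur_inj {A B C'} (g g' : Hom A (neg (tens (neg C') (neg (neg B))))) : uncur g = uncur g' -> g = g'.
Proof. by move=> H; rewrite -(cur_uncur g) H cur_uncur. Qed.

Lemma cur_natA {A A' B C'} (x : Hom A' A) (g : Hom (tens A B) C') : cur (g ⋅ (x ⊗ idm B)) = cur g ⋅ x.
Proof.
have H := cur_nat_AC x g (idm C').
by rewrite comp_idl negm_id tensm_id negm_id comp_idl in H.
Qed.
Lemma uncur_natA {A A' B C'} (x : Hom A' A) (y : Hom A (neg (tens (neg C') (neg (neg B))))) :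
  uncur (y ⋅ x) = uncur y ⋅ (x ⊗ idm B).
Proof. apply: cur_inj. by rewrite cur_uncur cur_natA cur_uncur. Qed.
Lemma uncur_natC {A B C' C''} (h : Hom C' C'') (y : Hom A (neg (tens (neg C') (neg (neg B))))) :
  uncur (N (N h ⊗ idm (neg (neg B))) ⋅ y) = h ⋅ uncur y.
Proof.
apply: cur_inj. rewrite cur_uncur.
have H := cur_nat_AC (idm A) (uncur y) h.
by rewrite tensm_id comp_idr cur_uncur comp_idr in H.
Qed.
Lemma uncur_natB {A B B' C'} (k : Hom B' B) (y : Hom A (neg (tens (neg C') (neg (neg B))))) :
  uncur (N (idm (neg C') ⊗ N (N k)) ⋅ y) = uncur y ⋅ (idm A ⊗ k).
Proof.
apply: cur_inj. by rewrite cur_uncur cur_nat_B cur_uncur.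
Qed.

Definition T {Z X Y} (h : Hom Z (par X Y)) : Hom (tens Z (neg X)) Y := ev X Y ⋅ (h ⊗ idm (neg X)).

Lemma Tdef {Z X Y} (h : Hom Z (par X Y)) : T h = uncur (parm (dn_inv X) (idm Y) ⋅ h).
Proof. by rewrite /T /ev uncur_natA. Qed.

Lemma T_inj {Z X Y} (h h' : Hom Z (par X Y)) : T h = T h' -> h = h'.
Proof.
rewrite !Tdef => /uncur_inj H.
have E : parm (dn X) (idm Y) ⋅ parm (dn_inv X) (idm Y) = idm _.
  by rewrite parm_comp dn_iso2 comp_idl parm_id.
by apply (cancel_l E).
Qed.

Lemma T_comp {Z Z' X Y} (h : Hom Z (par X Y)) (z : Hom Z' Z) : T (h ⋅ z) = T h ⋅ (z ⊗ idm _).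
Proof. by rewrite /T -comp_assoc -tensm_comp comp_idl. Qed.

Lemma T_post {Z X Y Y'} (h : Hom Z (par X Y)) (g : Hom Y Y') : T (parm (idm X) g ⋅ h) = g ⋅ T h.
Proof.
rewrite !Tdef parm_comp_r comp_idl comp_idr.
have -> : parm (dn_inv X) g = parm (idm _) g ⋅ parm (dn_inv X) (idm Y).
  by rewrite parm_comp comp_idl comp_idr.
rewrite -comp_assoc.
have -> : parm (idm (neg (neg X))) g = N (N g ⊗ idm (neg (neg (neg X)))).
  by rewrite /parm !negm_id.
by rewrite uncur_natC.
Qed.

Definition kS X B D : Hom (tens (tens (par X B) D) (neg X)) (tens B D) :=
    (ev X B ⊗ idm D) ⋅ (assoc (par X B) (neg X) D ⋅ ((idm (par X B) ⊗ sym D (neg X)) ⋅ assoc_inv (par X B) D (neg X))).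

Lemma T_switch X B D : T (switch X B D) = kS X B D.
Proof.
rewrite Tdef /switch parm_comp_r dn_iso1 comp_idl parm_id comp_idl uncur_cur.
by [].
Qed.

Lemma tl_comp {A B B' B''} (f : Hom B B') (g : Hom B' B'') : idm A ⊗ (g ⋅ f) = (idm A ⊗ g) ⋅ (idm A ⊗ f).
Proof. by rewrite -tensm_comp comp_idl. Qed.
Lemma tr_comp {A B B' B''} (f : Hom B B') (g : Hom B' B'') : (g ⋅ f) ⊗ idm A = (g ⊗ idm A) ⋅ (f ⊗ idm A).
Proof. by rewrite -tensm_comp comp_idl. Qed.

Lemma switch_natD X B D D' (g : Hom D D') :
  parm (idm X) (idm B ⊗ g) ⋅ switch X B D = switch X B D' ⋅ (idm (par X B) ⊗ g).
Proof.
apply: T_inj. rewrite T_post T_comp !T_switch /kS.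
rewrite tc comp_idl comp_idr (tsplit (ev X B)) -[idm (tens (par X B) (neg X))]tensm_id.
rewrite -?comp_assoc (pre (eq_sym (assoc_nat _ _ _))) -?comp_assoc tc comp_idl -sym_nat tl_comp.
by rewrite -?comp_assoc assoc_inv_nat.
Qed.

Lemma SU X B : parm (idm X) (runit B) ⋅ switch X B unit = runit (par X B).
Proof.
apply: T_inj. rewrite T_post !T_switch /kS /T.
rewrite (pre (runit_nat _)) -?comp_assoc.
have E : runit (tens (par X B) (neg X)) ⋅ assoc (par X B) (neg X) unit = idm _ ⊗ runit (neg X).
  by rewrite -K1 -comp_assoc assoc_iso1 comp_idr.
rewrite (pre E) -?comp_assoc tc comp_idl K4 triangle.
by [].
Qed.


Ltac show := match goal with |- ?G => idtac G end.
Lemma rho_par_iso1 A : rho_par A ⋅ rho_par_inv A = idm A.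
Proof.
rewrite /rho_par /rho_par_inv -?comp_assoc !nc -?comp_assoc.
by rewrite tc dn_iso2 comp_idl tensm_id comp_idl lunit_iso2 negm_id comp_idl dn_iso2.
Qed.

Lemma rho_par_iso2 A : rho_par_inv A ⋅ rho_par A = idm _.
Proof.
rewrite /rho_par /rho_par_inv -?comp_assoc (pre (dn_iso1 _)) comp_idl !nc -?comp_assoc.
by rewrite -negm_comp -?comp_assoc (pre (lunit_iso1 _)) comp_idl -tensm_comp dn_iso1 comp_idl tensm_id negm_id.
Qed.

Lemma rho_par_inv_nat {A B} (f : Hom A B) : parm f (idm fls) ⋅ rho_par_inv A = rho_par_inv B ⋅ f.
Proof.
rewrite /rho_par_inv /parm negm_id -?comp_assoc !nc -?comp_assoc.
by rewrite dn_inv_nat nc -tensm_comp comp_idl comp_idr tsplit' -?comp_assoc (pre (lunit_nat _)) -?comp_assoc.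
Qed.

Lemma rp_seal : { p : (forall X : Ob C, Hom (par X fls) X) * (forall X : Ob C, Hom X (par X fls)) | p = (fun X => rho_par X, fun X => rho_par_inv X) }.
Proof. by exists (fun X => rho_par X, fun X => rho_par_inv X). Qed.
Definition rp := fst (proj1_sig rp_seal).
Definition rpi := snd (proj1_sig rp_seal).
Lemma rpE X : rho_par X = rp X.
Proof. by rewrite /rp (proj2_sig rp_seal). Qed.
Lemma rpiE X : rho_par_inv X = rpi X.
Proof. by rewrite /rpi (proj2_sig rp_seal). Qed.
Lemma rp_iso1 X : rp X ⋅ rpi X = idm X.
Proof. rewrite -rpE -rpiE. exact: rho_par_iso1. Qed.
Lemma rp_iso2 X : rpi X ⋅ rp X = idm _.
Proof. rewrite -rpE -rpiE. exact: rho_par_iso2. Qed.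
Lemma rpi_nat {A B} (f : Hom A B) : parm f (idm fls) ⋅ rpi A = rpi B ⋅ f.
Proof. rewrite -!rpiE. exact: rho_par_inv_nat. Qed.

Lemma sw_seal : { s : forall X B D : Ob C, Hom (tens (par X B) D) (par X (tens B D)) | s = fun X B D => switch X B D }.
Proof. by exists (fun X B D => switch X B D). Qed.
Definition sw := proj1_sig sw_seal.
Lemma swE X B D : switch X B D = sw X B D.
Proof. by rewrite /sw (proj2_sig sw_seal). Qed.
Lemma sw_natD X B D D' (g : Hom D D') :
  parm (idm X) (idm B ⊗ g) ⋅ sw X B D = sw X B D' ⋅ (idm (par X B) ⊗ g).
Proof. rewrite -!swE. exact: switch_natD. Qed.
Lemma sw_SU X B : parm (idm X) (runit B) ⋅ sw X B unit = runit (par X B).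
Proof. rewrite -!swE. exact: SU. Qed.

Definition mixe (e : Hom fls t) A B : Hom (tens A B) (par A B) :=
  parm (idm A) (lunit B) ⋅ (parm (idm A) (e ⊗ idm B) ⋅ (sw A fls B ⋅ (rpi A ⊗ idm B))).

Lemma mixe_nat2 e A {B B'} (g : Hom B B') :
  parm (idm A) g ⋅ mixe e A B = mixe e A B' ⋅ (idm A ⊗ g).
Proof.
rewrite /mixe -?comp_assoc !parm_comp_r !comp_idl -tensm_comp comp_idl comp_idr (tsplit' (rpi A) g) -?comp_assoc.
rewrite (pre (eq_sym (sw_natD _ _ _ _ _))) -?comp_assoc !parm_comp_r !comp_idl -?comp_assoc.
have E : g ⋅ (lunit B ⋅ (e ⊗ idm B)) = lunit B' ⋅ ((e ⊗ idm B') ⋅ (idm fls ⊗ g)).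
  by rewrite (pre (eq_sym (lunit_nat _))) -!comp_assoc -!tensm_comp !comp_idl !comp_idr.
by rewrite E.
Qed.

Lemma mixe_t e A : mixe e A t ⋅ runit_inv A = parm (idm A) e ⋅ rpi A.
Proof.
rewrite /mixe -?comp_assoc parm_comp_r comp_idl K3.
have E : runit t ⋅ (e ⊗ idm t) = e ⋅ runit fls by rewrite runit_nat.
have S : parm (idm A) (e ⋅ runit fls) = parm (idm A) e ⋅ parm (idm A) (runit fls) by rewrite parm_comp comp_idl.
rewrite E S -?comp_assoc (pre (sw_SU _ _)).
by rewrite (pre (runit_nat _)) -?comp_assoc runit_iso2 comp_idr.
Qed.

Lemma mixe_f e A : lunit fls ⋅ (e ⊗ idm fls) = runit fls ⋅ (idm fls ⊗ e) ->
  mixe e A fls = rpi A ⋅ (runit A ⋅ (idm A ⊗ e)).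
Proof.
move=> LR.
rewrite /mixe -?comp_assoc parm_comp_r comp_idl LR.
have S : parm (idm A) (runit fls ⋅ (idm fls ⊗ e)) = parm (idm A) (runit fls) ⋅ parm (idm A) (idm fls ⊗ e) by rewrite parm_comp comp_idl.
rewrite S -?comp_assoc (pre (sw_natD _ _ _ _ _)).
rewrite -?comp_assoc (pre (sw_SU _ _)) -tensm_comp comp_idl comp_idr.
by rewrite (tsplit (rpi A)) (pre (runit_nat _)) -?comp_assoc.
Qed.

Lemma mx_seal : { m : forall (e : Hom fls t) (A B : Ob C), Hom (tens A B) (par A B) | m = mixe }.
Proof. by exists mixe. Qed.
Definition mx := proj1_sig mx_seal.
Lemma mxE e A B : mixe e A B = mx e A B.
Proof. by rewrite /mx (proj2_sig mx_seal). Qed.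
Lemma mx_nat2 e A {B B'} (g : Hom B B') :
  parm (idm A) g ⋅ mx e A B = mx e A B' ⋅ (idm A ⊗ g).
Proof. rewrite -!mxE. exact: mixe_nat2. Qed.
Lemma mx_t e A : mx e A t ⋅ runit_inv A = parm (idm A) e ⋅ rpi A.
Proof. rewrite -!mxE. exact: mixe_t. Qed.
Lemma mx_f e A : lunit fls ⋅ (e ⊗ idm fls) = runit fls ⋅ (idm fls ⊗ e) ->
  mx e A fls = rpi A ⋅ (runit A ⋅ (idm A ⊗ e)).
Proof. rewrite -!mxE. exact: mixe_f. Qed.

Lemma endo_comm (x y : Hom t t) : x ⋅ y = y ⋅ x.
Proof.
have E1 : x ⋅ y = runit t ⋅ ((x ⊗ idm t) ⋅ ((idm t ⊗ y) ⋅ lunit_inv t)).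
  rewrite (pre (runit_nat _)) -K3 -?comp_assoc (pre (lunit_nat _)) -?comp_assoc.
  by rewrite lunit_iso2 comp_idr.
have E2 : y ⋅ x = runit t ⋅ ((idm t ⊗ y) ⋅ ((x ⊗ idm t) ⋅ lunit_inv t)).
  rewrite -K3 (pre (lunit_nat _)) -?comp_assoc K3 (pre (runit_nat _)) -?comp_assoc -K3.
  by rewrite lunit_iso2 comp_idr.
by rewrite E1 E2 !tc !comp_idl !comp_idr.
Qed.

Definition Pff := neg (tens (neg (@fls C)) (neg (neg (@fls C)))).
Definition jj : Hom (neg t) (tens (neg fls) (neg (neg fls))) := (dn_inv t ⊗ dn_inv (neg t)) ⋅ lunit_inv (neg t).
Definition jji : Hom (tens (neg fls) (neg (neg fls))) (neg t) := lunit (neg t) ⋅ (dn t ⊗ dn (neg t)).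
Definition II : Hom Pff t := dn t ⋅ N jj.
Definition IIi : Hom t Pff := N jji ⋅ dn_inv t.

Lemma II_iso1 : II ⋅ IIi = idm t.
Proof.
rewrite /II /IIi -?comp_assoc nc /jj /jji -?comp_assoc tc !dn_iso2 tensm_id comp_idl lunit_iso2.
by rewrite negm_id comp_idl dn_iso2.
Qed.
Lemma II_iso2 : IIi ⋅ II = idm Pff.
Proof.
rewrite /II /IIi -?comp_assoc (pre (dn_iso1 _)) comp_idl -negm_comp /jj /jji -?comp_assoc.
by rewrite (pre (lunit_iso1 _)) comp_idl -tensm_comp !dn_iso1 tensm_id negm_id.
Qed.

Lemma lam_surj Z (k : Hom (tens Z fls) fls) : exists x : Hom Z t, lunit fls ⋅ (x ⊗ idm fls) = k.
Proof.
pose om := uncur IIi.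
have Phi : forall W (x : Hom W t), uncur (IIi ⋅ x) = om ⋅ (x ⊗ idm fls).
  by move=> W x; rewrite uncur_natA.
have Phi_inj : forall W (x y : Hom W t), om ⋅ (x ⊗ idm fls) = om ⋅ (y ⊗ idm fls) -> x = y.
  move=> W x y; rewrite -!Phi => /uncur_inj H. exact: (cancel_l II_iso1 H).
pose a := II ⋅ cur (lunit fls).
have Ha : lunit fls = om ⋅ (a ⊗ idm fls).
  by rewrite -Phi /a comp_assoc II_iso2 comp_idl uncur_cur.
pose w := II ⋅ cur (om ⋅ (lunit_inv fls ⋅ om)).
have Hw : om ⋅ (w ⊗ idm fls) = om ⋅ (lunit_inv fls ⋅ om).
  by rewrite -Phi /w comp_assoc II_iso2 comp_idl uncur_cur.
have wa : w ⋅ a = idm t.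
  apply: Phi_inj. rewrite tr_comp (pre Hw) -?comp_assoc -Ha lunit_iso1 comp_idr tensm_id comp_idr.
  by [].
have Hl : lunit fls ⋅ (w ⊗ idm fls) = om.
  by rewrite Ha -?comp_assoc -tensm_comp comp_idl endo_comm wa tensm_id comp_idr.
exists (w ⋅ (II ⋅ cur k)).
rewrite tr_comp (pre Hl) -Phi comp_assoc II_iso2 comp_idl uncur_cur.
by [].
Qed.

Lemma LR (e : Hom fls t) (d : Hom fls (tens fls fls)) :
  runit fls ⋅ ((idm fls ⊗ e) ⋅ d) = idm fls ->
  lunit fls ⋅ (e ⊗ idm fls) = runit fls ⋅ (idm fls ⊗ e).
Proof.
move=> Hc.
have [e' He'] := lam_surj _ (runit fls ⋅ (idm fls ⊗ e)).
have Lc : lunit fls ⋅ ((e' ⊗ idm fls) ⋅ d) = idm fls by rewrite comp_assoc He' -comp_assoc.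
have E1 : e = lunit t ⋅ ((e' ⊗ e) ⋅ d).
  by rewrite (tsplit' e') -?comp_assoc (pre (lunit_nat _)) -?comp_assoc Lc comp_idr.
have E2 : e' = runit t ⋅ ((e' ⊗ e) ⋅ d).
  by rewrite (tsplit e') -?comp_assoc (pre (runit_nat _)) -?comp_assoc Hc comp_idr.
have Ee : e = e' by rewrite {1}E1 {2}E2 K3.
by rewrite -He' Ee.
Qed.

Definition th : Hom (@fls C) fls := dn (neg t) ⋅ N (dn t).

Lemma thlem B (p : Hom (neg B) t) : N (dn B ⋅ N p) = N th ⋅ (dn_inv t ⋅ p).
Proof.
have S1 : dn (neg (neg (neg B))) ⋅ (N (dn (neg (neg B))) ⋅ dn_inv (neg B)) = N (dn B).
  rewrite -(NN_dn B) (pre (dn_nat _)). by rewrite -comp_assoc dn_iso2 comp_idr.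
rewrite negm_comp /th negm_comp NN_dn dn_inv_nat.
rewrite -?comp_assoc (nc (dn (neg t))) -dn_nat negm_comp -?comp_assoc.
rewrite (pre (dn_nat _)) -?comp_assoc S1.
by [].
Qed.

Lemma lunit_inv_nat {A B} (f : Hom A B) : lunit_inv B ⋅ f = (idm t ⊗ f) ⋅ lunit_inv A.
Proof.
apply: (cancel_l (lunit_iso1 B)).
rewrite comp_assoc lunit_iso2 comp_idl (pre (lunit_nat _)).
by rewrite -comp_assoc lunit_iso2 comp_idr.
Qed.

Lemma lemA B (d : Hom (neg B) (tens (neg B) (neg B))) (p : Hom (neg B) t) (g : Hom fls B) :
  lunit (neg B) ⋅ ((p ⊗ idm (neg B)) ⋅ d) = idm _ ->
  dn B ⋅ (N d ⋅ parm g (dn B ⋅ N p)) = g ⋅ (rp fls ⋅ parm (idm fls) th).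
Proof.
move=> Lc.
have Lc' : (p ⊗ idm (neg B)) ⋅ d = lunit_inv (neg B).
  apply: (cancel_l (lunit_iso1 (neg B))). by rewrite Lc lunit_iso2.
rewrite -rpE /rho_par /parm negm_id -?comp_assoc (pre (eq_sym (dn_nat g))) -?comp_assoc.
rewrite -!negm_comp -?comp_assoc.
congr (comp _ (N _)).
rewrite thlem lunit_inv_nat -Lc' -?comp_assoc !tc !comp_idl.
by rewrite !comp_idr -?comp_assoc.
Qed.
End S.

Section B.
Context (C : B1cat).
Notation t := (@unit (b1_sa C)).

Lemma mixE A B : mix A B = mx (Pi (@fls C)) A B.
Proof. by rewrite -mxE /mix /mixe swE rpiE. Qed.

Lemma nb_seal : { n : forall X : Ob C, Hom (par X X) X | n = fun X => nabla X }.
Proof. by exists (fun X => nabla X). Qed.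
Definition nb := proj1_sig nb_seal.
Lemma nbE X : nabla X = nb X.
Proof. by rewrite /nb (proj2_sig nb_seal). Qed.

Lemma left_counit (A : Ob C) : lunit A ⋅ ((Pi A ⊗ idm A) ⋅ Delta A) = idm A.
Proof.
rewrite -K4 -?comp_assoc (pre (sym_nat _ _)) -?comp_assoc Delta_cocomm.
exact: Delta_counit.
Qed.

Lemma right_counit' (A : Ob C) : (idm A ⊗ Pi A) ⋅ Delta A = runit_inv A.
Proof.
apply: (cancel_l (runit_iso1 A)). by rewrite Delta_counit runit_iso2.
Qed.

Lemma eth (SM : Pi (@fls C) = dn t ⋅ N (Pi fls)) : Pi fls ⋅ th = Pi (@fls C).
Proof.
rewrite /th (pre (eq_sym (dn_nat _))) -comp_assoc -negm_comp.
by rewrite -!SM.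
Qed.

Lemma nabla_counit_t (SM : Pi (@fls C) = dn t ⋅ N (Pi fls)) :
  nb t ⋅ (parm (idm t) (Pi fls) ⋅ rpi t) = idm t.
Proof.
rewrite -nbE -rpiE /rho_par_inv /nabla /parm negm_id -?comp_assoc !nc -?comp_assoc tc comp_idl -SM.
by rewrite left_counit negm_id comp_idl dn_iso2.
Qed.

Theorem part1 (SM : Pi (@fls C) = dn t ⋅ N (Pi fls)) (A : Ob C) (f : Hom A t) : plus f (Pi A) = f.
Proof.
have S : parm f (Pi A) = parm f (idm t) ⋅ parm (idm A) (Pi A) by rewrite parm_comp comp_idl comp_idr.
rewrite /plus mixE nbE S -?comp_assoc (pre (mx_nat2 _ _ _)) -?comp_assoc right_counit' mx_t.
have S2 : parm f (idm t) ⋅ parm (idm A) (Pi fls) = parm (idm t) (Pi fls) ⋅ parm f (idm fls).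
  by rewrite !parm_comp !comp_idl !comp_idr.
have H := nabla_counit_t SM. rewrite comp_assoc in H.
by rewrite (pre S2) -?comp_assoc rpi_nat !comp_assoc H comp_idl.
Qed.

Theorem part2 (SM : Pi (@fls C) = dn t ⋅ N (Pi fls)) (B : Ob C) (g : Hom fls B) : plus g (amalg B) = g.
Proof.
have LA : nabla B ⋅ parm g (amalg B) = g ⋅ (rp fls ⋅ parm (idm fls) th).
  rewrite /nabla /amalg -comp_assoc. apply: lemA. exact: left_counit.
rewrite nbE in LA.
have LRf := LR _ _ (Delta_counit (@fls C)).
rewrite /plus mixE nbE (pre LA) -?comp_assoc (pre (mx_nat2 _ _ _)) -?comp_assoc (mx_f _ _ LRf).
rewrite -?comp_assoc (pre (rp_iso1 _)) comp_idl tc comp_idl eth //.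
by rewrite Delta_counit comp_idr.
Qed.
End B.

Theorem proposition5 (C : B1cat) :
  single_mixed C ->
  Pi (@unit C) = idm (@unit C) ->
  (forall (A : Ob C) (f : Hom A (@unit C)), plus f (Pi A) = f) /\
  (forall (B : Ob C) (g : Hom (@fls C) B), plus g (amalg B) = g).
Proof.
move=> SM _.
have SM' : Pi (@fls C) = dn unit ⋅ N (Pi fls) by exact: SM.
split.
- exact: part1 SM'.
- exact: part2 SM'.
Qed.
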